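(* Let $\mathcal X=\mathcal X_1\times\cdots\times\mathcal X_b$, $\mathcal X_i=\mathbb R^{m_i\times n_i}$ with trace inner product and norms $\|\cdot\|_{(i)}$ (dual $\|\cdot\|_{(i)\star}$), $f$ continuously differentiable, $\mathcal D$ a distribution on subsets of $[b]$, and assume constants $L^0_{i,S},L^1_{i,S}\ge0$ exist such that for all $S\in\operatorname{supp}(\mathcal D)$, $i\in S$, $X\in\mathcal X$ and $\Gamma$ with $\Gamma_j=0$ for $j\notin S$: $\|\nabla_if(X+\Gamma)-\nabla_if(X)\|_{(i)\star}\le(L^0_{i,S}+L^1_{i,S}\|\nabla_if(X)\|_{(i)\star})\|\Gamma_i\|_{(i)}$. Let $S\in\operatorname{supp}(\mathcal D)$. Then for all $X\in\mathcal X$ and $\Gamma$ with $\Gamma_i=0$ for $i\notin S$, $$\big|f(X+\Gamma)-f(X)-\langle\nabla f(X),\Gamma\rangle\big|\le\sum_{i\in S}\frac{L^0_{i,S}+L^1_{i,S}\|\nabla_if(X)\|_{(i)\star}}2\|\Gamma_i\|_{(i)}^2.$$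
   Context: $\operatorname{supp}(\mathcal D)$ is the set of subsets of $[b]$ with positive probability under $\mathcal D$. *)

(* Defs.v *)
From HB Require Import structures.
From mathcomp Require Import all_boot all_order all_algebra.
From mathcomp Require Import boolp classical_sets reals.
Set Implicit Arguments. Unset Strict Implicit. Unset Printing Implicit Defensive.
Import Order.TTheory GRing.Theory Num.Theory.
Local Open Scope ring_scope.
Local Open Scope classical_set_scope.

Section Blocks.
Variables (R : realType) (b : nat) (m n : 'I_b -> nat).

Definition blocks := forall i : 'I_b, 'M[R]_(m i, n i).

Definition badd (X Y : blocks) : blocks := fun i => X i + Y i.
Definition bsub (X Y : blocks) : blocks := fun i => X i - Y i.

Definition mip (p q : nat) (A B : 'M[R]_(p, q)) : R := \tr (A^T *m B).
Definition bip (X Y : blocks) : R := \sum_(i < b) mip (X i) (Y i).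

(* A fixed reference norm on X (entrywise l1), used only to define
   differentiability and continuity (all norms are equivalent in finite dim). *)
Definition bnorm (X : blocks) : R :=
  \sum_(i < b) \sum_(k < m i) \sum_(l < n i) `|X i k l|.

Definition is_gradient (f : blocks -> R) (g : blocks -> blocks) : Prop :=
  forall X (eps : R), 0 < eps -> exists2 delta : R, 0 < delta &
    forall H, bnorm H < delta ->
      `|f (badd X H) - f X - bip (g X) H| <= eps * bnorm H.

Definition bcontinuous (g : blocks -> blocks) : Prop :=
  forall X (eps : R), 0 < eps -> exists2 delta : R, 0 < delta &
    forall Y, bnorm (bsub Y X) < delta -> bnorm (bsub (g Y) (g X)) < eps.

End Blocks.

Definition is_norm (R : realType) (p q : nat) (N : 'M[R]_(p, q) -> R) : Prop :=
  [/\ forall A, 0 <= N A,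
      forall A, N A = 0 -> A = 0,
      forall (a : R) A, N (a *: A) = `|a| * N A &
      forall A B, N (A + B) <= N A + N B].

Definition dual_norm (R : realType) (p q : nat) (N : 'M[R]_(p, q) -> R)
  (G : 'M[R]_(p, q)) : R :=
  sup [set mip G Y | Y in [set Y | N Y <= 1]].

Definition is_distribution (b : nat) (R : realType) (P : {set 'I_b} -> R) : Prop :=
  (forall S, 0 <= P S) /\ \sum_(S : {set 'I_b}) P S = 1.

Definition supp (b : nat) (R : realType) (P : {set 'I_b} -> R) : {set {set 'I_b}} :=
  [set S | 0 < P S].

(* Main.v *)
Require Import Defs.
From HB Require Import structures.
From mathcomp Require Import all_boot all_order all_algebra.
From mathcomp Require Import all_classical all_reals all_analysis.
From mathcomp Require Import ring lra.
Require Import Defs.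
Import Order.TTheory GRing.Theory Num.Theory.
Import numFieldNormedType.Exports.
Set Implicit Arguments. Unset Strict Implicit. Unset Printing Implicit Defensive.
Local Open Scope ring_scope.
Local Open Scope classical_set_scope.

Section A.
Variables (R : realType) (p q : nat) (N : 'M[R]_(p,q) -> R).
Hypothesis hN : is_norm N.

Lemma N0 : N 0 = 0.
Proof. case: hN => _ _ hZ _. by rewrite -(scale0r (0 : 'M[R]_(p,q))) hZ normr0 mul0r. Qed.
Lemma Nge0 A : 0 <= N A. Proof. by case: hN => h _ _ _; apply: h. Qed.
Lemma NZ a A : N (a *: A) = `|a| * N A. Proof. by case: hN => _ _ h _; apply: h. Qed.
Lemma ND A B : N (A + B) <= N A + N B. Proof. by case: hN => _ _ _ h; apply: h. Qed.
Lemma Neq0 A : N A = 0 -> A = 0. Proof. by case: hN => _ h _ _; apply: h. Qed.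
Lemma NN A : N (- A) = N A.
Proof. by rewrite -scaleN1r NZ normrN normr1 mul1r. Qed.
Lemma Nsum (I : Type) (r : seq I) (F : I -> 'M[R]_(p,q)) :
  N (\sum_(i <- r) F i) <= \sum_(i <- r) N (F i).
Proof.
elim: r => [|x r IH]; first by rewrite !big_nil N0.
rewrite !big_cons; apply: le_trans (ND _ _) _; by rewrite lerD2l.
Qed.
Lemma Ndist A B : `|N A - N B| <= N (A - B).
Proof.
have := ND (B - A) A; have := ND (A - B) B; rewrite !subrK -(NN (B - A)) opprB.
rewrite ler_norml => h1 h2; apply/andP; split; lra.
Qed.

Lemma entry_le n (v : 'rV[R]_n) j : `|v ord0 j| <= `|v|.
Proof.
have /mapP[k Hk ->] : `|v ord0 j| \in [seq `|v x.1 x.2| | x : 'I_1 * 'I_n].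
  by apply/mapP; exists (ord0, j) => //=; rewrite mem_enum.
by rewrite [leRHS]/Num.Def.normr /= mx_normrE; apply/bigmax_geP; right => /=; exists k.
Qed.

Definition K := \sum_(j < p * q) N (vec_mx (delta_mx 0 j : 'rV[R]_(p*q))).

Lemma K_ge0 : 0 <= K.
Proof. by apply: sumr_ge0 => j _; exact: Nge0. Qed.

Lemma N_upper (u : 'rV[R]_(p*q)) : N (vec_mx u) <= K * `|u|.
Proof.
have -> : vec_mx u = \sum_(j < p * q) u ord0 j *: vec_mx (delta_mx 0 j : 'rV[R]_(p*q)).
  rewrite {1}(matrix_sum_delta u) big_ord1 linear_sum; apply: eq_bigr => j _.
  by rewrite linearZ.
apply: le_trans (Nsum _ _) _.
rewrite /K mulr_suml; apply: ler_sum => j _; rewrite NZ mulrC.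
apply: ler_wpM2l; first exact: Nge0.
exact: entry_le.
Qed.

Lemma phi_cont : continuous (fun v : 'rV[R]_(p*q) => N (vec_mx v)).
Proof.
move=> x; apply/(@cvgrPdist_lt _ _ _ _ (nbhs_filter x)) => e e0.

apply/(@nbhs_normP _ 'rV[R]_(p*q) x); exists (e / (K + 1)).
  by rewrite /= divr_gt0 // ltr_wpDl // K_ge0.
move=> y /= xy.
apply: le_lt_trans (Ndist _ _) _.
rewrite -linearB /=.
apply: le_lt_trans (N_upper _) _.
have K1 : 0 < K + 1 by rewrite ltr_wpDl // K_ge0.
apply: (@le_lt_trans _ _ ((K + 1) * `|x - y|)).
  by apply: ler_wpM2r => //; rewrite lerDl.
by rewrite -ltr_pdivlMl // mulrC.
Qed.


Lemma N_lower : exists2 c, 0 < c & forall v : 'rV[R]_(p*q), c * `|v| <= N (vec_mx v).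
Proof.
pose A := [set v : 'rV[R]_(p*q) | `|v| = 1].
have key : forall c, 0 < c -> (forall w, A w -> c <= N (vec_mx w)) ->
    forall v : 'rV[R]_(p*q), c * `|v| <= N (vec_mx v).
  move=> c c0 hc v.
  have [->|v0] := eqVneq v 0; first by rewrite normr0 mulr0 Nge0.
  have nv : 0 < `|v| by rewrite normr_gt0.
  have Aw : A (`|v|^-1 *: v) by rewrite /A /= normrZ normfV normr_id mulVf // gt_eqF.
  have := hc _ Aw; rewrite linearZ /= NZ normfV normr_id => h.
  by rewrite -ler_pdivlMr // mulrC.
have [[w0 Aw0]|nA] := pselect (A !=set0); last first.
  exists 1 => //; apply: key => // w Aw; exfalso; apply: nA; by exists w.
have cA : compact A.
  apply: bounded_closed_compact.
    exists 1; split; first by rewrite num_real.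
    move=> M M1 v Av; rewrite /=; move: Av; rewrite /A /= => ->; exact: ltW.
  have -> : A = (fun v : 'rV[R]_(p*q) => `|v|) @^-1` [set x | x = 1] by [].
  apply: preimage_closed; last exact: closed_eq.
  by move=> v _; apply: norm_continuous.
have [c Ac hc] := EVT_min_rV (ex_intro _ w0 Aw0) cA
   (continuous_subspaceT (phi_cont)).
have cpos : 0 < N (vec_mx c).
  rewrite lt_def Nge0 andbT; apply/eqP => /Neq0 h.
  have : c = 0 by rewrite -(vec_mxK c) h linear0.
  by move: Ac; rewrite inE /A /= => + c0; rewrite c0 normr0 => /eqP; rewrite eq_sym oner_eq0.
exists (N (vec_mx c)) => //.
apply: key => // w Aw; apply: hc; by rewrite inE.
Qed.


Lemma mipE (G Y : 'M[R]_(p,q)) : mip G Y = \sum_i \sum_j G i j * Y i j.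
Proof.
rewrite /mip /mxtrace exchange_big; apply: eq_bigr => j _.
by rewrite mxE; apply: eq_bigr => i _; rewrite mxE.
Qed.

Lemma mipZ (G Y : 'M[R]_(p,q)) a : mip G (a *: Y) = a * mip G Y.
Proof. by rewrite /mip -scalemxAr mxtraceZ. Qed.

Let E G := [set mip G Y | Y in [set Y | N Y <= 1]].

Lemma dual_has_sup G : has_sup (E G).
Proof.
split.
  exists (mip G 0), 0 => //=; by rewrite N0.
have [c c0 hc] := N_lower.
exists (\sum_i \sum_j `|G i j| * c^-1) => _ [Y /= NY <-].
rewrite mipE; apply: ler_sum => i _; apply: ler_sum => j _.
apply: le_trans (ler_norm _) _; rewrite normrM; apply: ler_wpM2l => //.
have := hc (mxvec Y); rewrite mxvecK => h.
rewrite -(mxvecE Y) -[c^-1]div1r ler_pdivlMr // mulrC; apply: le_trans NY.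
apply: le_trans h; apply: ler_wpM2l; [exact: ltW | exact: entry_le].
Qed.

Lemma dual_ub G Y : N Y <= 1 -> mip G Y <= dual_norm N G.
Proof.
move=> NY; have := sup_upper_bound (dual_has_sup G); move/ubP; apply.
by exists Y.
Qed.

Lemma dual_ge0 G : 0 <= dual_norm N G.
Proof.
have -> : 0 = mip G 0 by rewrite /mip mulmx0 mxtrace0.
by apply: dual_ub; rewrite N0.
Qed.

Lemma dual_ineq G Y : `|mip G Y| <= dual_norm N G * N Y.
Proof.
have [->|Y0] := eqVneq Y 0.
  by rewrite /mip mulmx0 mxtrace0 normr0 N0 mulr0.
have nY : 0 < N Y.
  by rewrite lt_def Nge0 andbT; apply: contra Y0 => /eqP /Neq0 ->.
have key : forall s : R, `|s| = 1 -> mip G (s *: Y) <= dual_norm N G * N Y.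
  move=> s s1.
  have -> : s *: Y = N Y *: ((N Y)^-1 *: (s *: Y)) by rewrite scalerA mulfV ?scale1r // gt_eqF.
  rewrite mipZ mulrC; apply: ler_wpM2r; first exact: Nge0.
  apply: dual_ub; rewrite !NZ s1 mul1r normfV (ger0_norm (Nge0 _)) mulVf ?gt_eqF //.
rewrite ler_norml; apply/andP; split.
  have h1 : `|(-1 : R)| = 1 by rewrite normrN normr1.
  have := key (-1) h1; rewrite mipZ; lra.
have h1 : `|(1 : R)| = 1 by rewrite normr1.
by have := key 1 h1; rewrite scale1r.
Qed.

End A.

Section B.
Variables (R : realType) (b : nat) (m n : 'I_b -> nat).
Variables (f : blocks R m n -> R) (g : blocks R m n -> blocks R m n).
Hypothesis hg : is_gradient f g.
Implicit Types (G H X : blocks R m n).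

Definition line (X G : blocks R m n) (t : R) : blocks R m n := fun i => X i + t *: G i.
Definition bscale (h : R) (G : blocks R m n) : blocks R m n := fun i => h *: G i.

Lemma bip_scale G H h : bip G (bscale h H) = h * bip G H.
Proof. by rewrite /bip mulr_sumr; apply: eq_bigr => i _; rewrite mipZ. Qed.

Lemma bnorm_scale H h : bnorm (bscale h H) = `|h| * bnorm H.
Proof.
rewrite /bnorm mulr_sumr; apply: eq_bigr => i _; rewrite mulr_sumr; apply: eq_bigr => k _.
rewrite mulr_sumr; apply: eq_bigr => l _; by rewrite mxE normrM.
Qed.

Lemma bnorm_ge0 H : 0 <= bnorm H.
Proof. by apply: sumr_ge0 => i _; apply: sumr_ge0 => k _; apply: sumr_ge0. Qed.

Lemma badd_line X G t h : badd (line X G t) (bscale h G) = line X G (h + t).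
Proof.
apply: functional_extensionality_dep => i.
by rewrite /badd /line /bscale scalerDl [h *: _ + _]addrC addrA.
Qed.

Lemma deriv_line X G (t : R) :
  is_derive t (1 : R) (fun s : R => f (line X G s)) (bip (g (line X G t)) G).
Proof.
set phi := fun s => f (line X G s).
set D := bip (g (line X G t)) G.
have H : (fun h => h^-1 *: ((phi \o shift t) (h *: 1) - phi t)) @ 0^' --> D.
  apply/cvgrPdist_le => e e0.
  have B0 : 0 < bnorm G + 1 by rewrite ltr_wpDl // bnorm_ge0.
  have [d d0 hd] := hg (line X G t) (divr_gt0 e0 B0).
  have dB : 0 < d / (bnorm G + 1) by rewrite divr_gt0.
  near=> h.
  have h0 : h != 0 by near: h; exact: nbhs_dnbhs_neq.
  have hs : `|h| < d / (bnorm G + 1) by near: h; exact: dnbhs0_lt.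
  have nh : 0 < `|h| by rewrite normr_gt0.
  have Hn : bnorm (bscale h G) < d.
    rewrite bnorm_scale; apply: (@le_lt_trans _ _ (`|h| * (bnorm G + 1))).
      by rewrite ler_wpM2l // lerDl.
    by rewrite -ltr_pdivlMr.
  have := hd _ Hn; rewrite badd_line bip_scale bnorm_scale -/D => Hd.
  rewrite /= [h%:A]mulr1.
  have -> : D - h^-1 *: (phi (h + t) - phi t) = - (h^-1 * (phi (h + t) - phi t - h * D)).
    by rewrite /GRing.scale /=; field.
  rewrite normrN normrM normfV.
  rewrite ler_pdivrMl //.
  apply: le_trans Hd _.
  rewrite mulrCA ler_wpM2l // ?ltW //.
  by rewrite mulrAC ltr_pdivrMr // ltr_pM2l // ltrDl.
apply: DeriveDef; first by apply/cvgP: H.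
exact: cvg_lim H.
Unshelve. all: by end_near.
Qed.
End B.

Lemma mono (R : realType) (k dk : R -> R) :
  (forall x : R, is_derive x (1 : R) k (dk x)) -> (forall x, 0 < x < 1 -> dk x <= 0) -> k 1 <= k 0.
Proof.
move=> hd hneg.
have hc : {within `[0, 1], continuous k}.
  apply: derivable_within_continuous => x _; exact: ex_derive.
have [c] := @MVT R k dk 0 1 ltr01 (fun x _ => hd x) hc.
rewrite in_itv /= => /andP[c0 c1] e.
rewrite -subr_le0 e subr0 mulr1; apply: hneg; by rewrite c0 c1.
Qed.

Lemma poly_der (R : realType) (a B : R) x :
  is_derive x (1:R) (horner (B%:P * 'X + a%:P * 'X^2)) (B + a * (x + x)).
Proof.
have := @is_derive_poly R (B%:P * 'X + a%:P * 'X^2) x.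
by rewrite !poly.derivE !hornerE /=.
Qed.


Lemma mipB (R : realType) p q (A B Y : 'M[R]_(p,q)) : mip (A - B) Y = mip A Y - mip B Y.
Proof.
rewrite !mipE -sumrB; apply: eq_bigr => i _; rewrite -sumrB; apply: eq_bigr => j _.
by rewrite !mxE mulrDl mulNr.
Qed.

Local Close Scope classical_set_scope.

Theorem lemma10 (R : realType) (b : nat) (m n : 'I_b -> nat)
  (nrm : forall i : 'I_b, 'M[R]_(m i, n i) -> R)
  (f : blocks R m n -> R) (g : blocks R m n -> blocks R m n)
  (P : {set 'I_b} -> R) (L0 L1 : 'I_b -> {set 'I_b} -> R) :
  (forall i, is_norm (nrm i)) ->
  is_gradient f g -> bcontinuous g ->
  is_distribution P ->
  (forall i S, 0 <= L0 i S) -> (forall i S, 0 <= L1 i S) ->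
  (forall S, S \in supp P -> forall i, i \in S ->
     forall (X Gam : blocks R m n), (forall j, j \notin S -> Gam j = 0) ->
       dual_norm (nrm i) (g (badd X Gam) i - g X i)
         <= (L0 i S + L1 i S * dual_norm (nrm i) (g X i)) * nrm i (Gam i)) ->
  forall S, S \in supp P ->
  forall (X Gam : blocks R m n), (forall i, i \notin S -> Gam i = 0) ->
    `|f (badd X Gam) - f X - bip (g X) Gam|
      <= \sum_(i in S)
           (L0 i S + L1 i S * dual_norm (nrm i) (g X i)) / 2 * nrm i (Gam i) ^+ 2.
Proof.
move=> hN hgrad _ _ hL0 hL1 hL S hS X Gam hGam.
set c := fun i => L0 i S + L1 i S * dual_norm (nrm i) (g X i).
have c0 : forall i, 0 <= c i.
  by move=> i; rewrite /c addr_ge0 // mulr_ge0 // dual_ge0.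
set C := \sum_(i in S) c i * nrm i (Gam i) ^+ 2.
have -> : \sum_(i in S) (L0 i S + L1 i S * dual_norm (nrm i) (g X i)) / 2 * nrm i (Gam i) ^+ 2
    = C / 2.
  by rewrite /C mulr_suml; apply: eq_bigr => i _; rewrite mulrAC.
set B := bip (g X) Gam.
set phi := fun s => f (line X Gam s).
have e1 : f (badd X Gam) = phi 1.
  rewrite /phi; congr f; apply: functional_extensionality_dep => i.
  by rewrite /line /badd scale1r.
have e0 : f X = phi 0.
  rewrite /phi; congr f; apply: functional_extensionality_dep => i.
  by rewrite /line scale0r addr0.
have bound : forall t, 0 < t < 1 -> `|bip (g (line X Gam t)) Gam - B| <= C * t.
  move=> t /andP[t0 t1].
  have -> : bip (g (line X Gam t)) Gam - B
      = \sum_i mip (g (line X Gam t) i - g X i) (Gam i).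
    by rewrite /B /bip -sumrB; apply: eq_bigr => i _; rewrite mipB.
  apply: le_trans (ler_norm_sum _ _ _) _.
  rewrite /C mulr_suml [X in _ <= X]big_mkcond /=; apply: ler_sum => i _.
  case: ifP => iS; last first.
    by rewrite (hGam i (negbT iS)) /mip mulmx0 mxtrace0 normr0.
  apply: le_trans (dual_ineq (hN i) _ _) _.
  have hz : forall j, j \notin S -> bscale t Gam j = 0.
    by move=> j /hGam; rewrite /bscale => ->; rewrite scaler0.
  have := hL S hS i iS X (bscale t Gam) hz.
  rewrite -/(c i).
  have -> : badd X (bscale t Gam) = line X Gam t by [].
  rewrite /bscale (NZ (hN i)) (ger0_norm (ltW t0)) => h.
  apply: le_trans (ler_wpM2r (Nge0 (hN i) _) h) _.
  by rewrite expr2 le_eqVlt; apply/orP; left; apply/eqP; ring.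
have key : forall s : R, `|s| = 1 -> s * (phi 1 - phi 0 - B) <= C / 2.
  move=> s s1.
  pose k := (s \*: phi) - horner ((s * B)%:P * 'X + (C / 2)%:P * 'X^2).
  have E1 : forall x, k x = s * phi x - ((s * B)%:P * 'X + (C / 2)%:P * 'X^2).[x] by [].
  have hs : forall x : R, s * x <= `|x|.
    by move=> x; apply: le_trans (ler_norm _) _; rewrite normrM s1 mul1r.
  have := @mono R k (fun x => s *: bip (g (line X Gam x)) Gam - (s * B + C / 2 * (x + x))).
  rewrite !E1 !hornerE /=.
  move=> H.
  suff : s * phi 1 - (s * B + C / 2 * 1 * 1) <= s * phi 0 - C / 2 * 0 * 0.
    move=> h; lra.
  apply: H.
    move=> x; apply: is_deriveB; first exact: is_deriveZ (deriv_line hgrad X Gam x).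
    exact: poly_der.
  move=> x hx; have := bound x hx; have := hs (bip (g (line X Gam x)) Gam - B).
  rewrite /GRing.scale /=; lra.
rewrite e1 e0 ler_norml; apply/andP; split.
  have := key (-1); rewrite normrN normr1 => /(_ erefl); lra.
have := key 1; rewrite normr1 => /(_ erefl); lra.
Qed.
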